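(* Let $\mathcal{R}$ be a rational set of regular languages over an alphabet $\Sigma$. Then its complement $\overline{\mathcal{R}}=\{L\subseteq\Sigma^*\mid L\notin\mathcal{R}\}$ is not a rational set of regular languages.
   Context: An alphabet is a nonempty finite set. A regular language substitution $\varphi:\Delta\to2^{\Sigma^*}$ maps each symbol of an alphabet $\Delta$ to a regular language over $\Sigma$, extended by $\varphi(\delta w)=\varphi(\delta)\varphi(w)$. A set $\mathcal{R}$ of regular languages over $\Sigma$ is a rational set of regular languages if there are an alphabet $\Delta$, a regular $K\subseteq\Delta^+$ and a regular language substitution $\varphi$ with $\mathcal{R}=\{\varphi(w)\mid w\in K\}$. *)

(* Defs.v *)
(* alphabets are nonempty finTypes, words are seq, languages
   are Prop-valued predicates on words; sets of languages are predicates on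
   languages, compared up to extensional equality of languages. *)
From mathcomp Require Import all_boot.
Set Implicit Arguments. Unset Strict Implicit. Unset Printing Implicit Defensive.

Definition alphabet (S : finType) : Prop := 0 < #|S|.

Definition language (S : finType) := seq S -> Prop.

Definition lang_eq (S : finType) (L1 L2 : language S) : Prop :=
  forall w, L1 w <-> L2 w.

Definition regular (S : finType) (L : language S) : Prop :=
  exists (Q : finType) (q0 : Q) (d : Q -> S -> Q) (F : pred Q),
    forall w, L w <-> F (foldl d q0 w).

Definition eps_lang (S : finType) : language S := fun w => w = [::].

Definition conc (S : finType) (L1 L2 : language S) : language S :=
  fun w => exists u v, w = u ++ v /\ L1 u /\ L2 v.

Definition subst_word (D S : finType) (phi : D -> language S) (w : seq D)
  : language S := foldr (fun d L => conc (phi d) L) (@eps_lang S) w.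

Definition lang_set (S : finType) := language S -> Prop.

Definition rational_set (S : finType) (R : lang_set S) : Prop :=
  exists (D : finType) (K : language D) (phi : D -> language S),
    [/\ alphabet D,
        regular K,
        (forall w, K w -> w <> [::]),
        (forall d, regular (phi d)) &
        (forall L, R L <-> exists w, K w /\ lang_eq L (subst_word phi w))].

Definition lang_set_compl (S : finType) (R : lang_set S) : lang_set S :=
  fun L => ~ R L.

(* Main.v *)
Require Import Defs.
From mathcomp Require Import all_boot.

Theorem proposition3 (S : finType) (R : lang_set S) :
  alphabet S -> rational_set R -> ~ rational_set (lang_set_compl R).
Proof.
move=> HS [D [K [phi [_ _ _ _ HR]]]] [D' [K' [phi' [_ _ _ _ HR']]]].
case/card_gt0P: HS => s0 _.
pose I := (seq D + seq D')%type.
pose lang (i : I) := match i with inl w => subst_word phi w | inr w => subst_word phi' w end.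
pose f (i : I) := nseq (pickle i) s0.
have finj : injective f.
  move=> i j /(congr1 size); rewrite !size_nseq; exact: (pcan_inj (@pickleK _)).
pose L : language S := fun x => exists i, x = f i /\ ~ lang i (f i).
have noeq : forall i, ~ lang_eq L (lang i).
  move=> i Heq.
  have H1 : L (f i) <-> ~ lang i (f i).
    split; first by move=> [j [/finj <- Hj]].
    by move=> H; exists i.
  have H2 := Heq (f i).
  have nl : ~ lang i (f i) by move=> h; exact: (proj1 H1 (proj2 H2 h)) h.
  exact: nl (proj1 H2 (proj2 H1 nl)).
have nR : ~ R L.
  by move=> /HR [w [_ Hw]]; exact: (noeq (inl w)).
have /HR' [w [_ Hw]] : lang_set_compl R L by [].
exact: (noeq (inr w)).
Qed.
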